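(* Let $f\colon[0,1]\to\mathbb{R}_{\ge 0}$ be Riemann-integrable, let $\delta\in(0,1)$ and $0<\beta<\alpha\le 1$. Assume $\int_0^1(1-\theta^\alpha) f(\theta)\,\mathrm{d}\theta>0$. Then $$\frac{\int_0^\delta (1-\theta^\alpha) f(\theta)\,\mathrm{d}\theta}{\int_0^1 (1-\theta^\alpha) f(\theta)\,\mathrm{d}\theta}\ \le\ \frac{\int_0^\delta (1-\theta^\beta) f(\theta)\,\mathrm{d}\theta}{\int_0^1 (1-\theta^\beta) f(\theta)\,\mathrm{d}\theta}.$$ *)

(* Defs.v *)
From Stdlib Require Import Reals.
From Coquelicot Require Import Coquelicot.
Open Scope R_scope.

(* Real power theta^a for theta >= 0 and a > 0, with the convention 0^a = 0
   (Stdlib's Rpower 0 a evaluates to 1, which is not the intended value). *)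
Definition rpow (theta a : R) : R :=
  if Rle_dec theta 0 then 0 else Rpower theta a.

(* Main.v *)
Require Import Defs.
From Stdlib Require Import Reals Lra Lia ZArith ClassicalEpsilon.
From Coquelicot Require Import Coquelicot.
Open Scope R_scope.

Lemma rpow_pos_eq x a : 0 < x -> rpow x a = exp (a * ln x).
Proof. intros; unfold rpow, Rpower; destruct (Rle_dec x 0); [lra|reflexivity]. Qed.

Lemma rpow_0 a : rpow 0 a = 0.
Proof. unfold rpow; destruct (Rle_dec 0 0); [reflexivity|lra]. Qed.

Lemma rpow_ge0 x a : 0 <= rpow x a.
Proof. unfold rpow, Rpower; destruct (Rle_dec x 0); [lra|]. left; apply exp_pos. Qed.

Lemma rpow_mult x y a : 0 <= x -> 0 <= y -> rpow (x*y) a = rpow x a * rpow y a.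
Proof.
  intros hx hy.
  destruct (Req_dec x 0) as [->|nx]. { rewrite Rmult_0_l, rpow_0; ring. }
  destruct (Req_dec y 0) as [->|ny]. { rewrite Rmult_0_r, rpow_0; ring. }
  assert (0 < x) by lra. assert (0 < y) by lra.
  rewrite !rpow_pos_eq; try nra.
  rewrite ln_mult by lra. rewrite <- exp_plus. f_equal. ring.
Qed.

Lemma rpow_1 a : rpow 1 a = 1.
Proof. rewrite rpow_pos_eq by lra. rewrite ln_1, Rmult_0_r, exp_0. reflexivity. Qed.

Lemma rpow_le x y a : 0 < a -> 0 <= x <= y -> rpow x a <= rpow y a.
Proof.
  intros ha [hx hxy]. destruct (Req_dec x 0) as [->|nx].
  { rewrite rpow_0; apply rpow_ge0. }
  rewrite !rpow_pos_eq by lra.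
  destruct (Req_dec x y) as [->|nxy]; [lra|].
  left; apply exp_increasing. apply Rmult_lt_compat_l; auto. apply ln_increasing; lra.
Qed.

Lemma rpow_lt1 x a : 0 < a -> 0 <= x < 1 -> rpow x a < 1.
Proof.
  intros ha hx. destruct (Req_dec x 0) as [->|nx]. { rewrite rpow_0; lra. }
  rewrite rpow_pos_eq by lra. rewrite <- exp_0. apply exp_increasing.
  assert (ln x < 0) by (rewrite <- ln_1; apply ln_increasing; lra). nra.
Qed.

Lemma rpow_le1 x a : 0 < a -> 0 <= x <= 1 -> rpow x a <= 1.
Proof.
  intros ha hx. destruct (Req_dec x 1) as [->|nx]. { rewrite rpow_1; lra. }
  left; apply rpow_lt1; lra.
Qed.

Lemma rpow_ge_self x a : 0 < a <= 1 -> 0 <= x <= 1 -> x <= rpow x a.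
Proof.
  intros ha hx. destruct (Req_dec x 0) as [->|nx]. { rewrite rpow_0; lra. }
  rewrite rpow_pos_eq by lra. rewrite <- (exp_ln x) at 1 by lra.
  assert (ln x <= 0).
  { destruct (Req_dec x 1) as [->|]; [rewrite ln_1; lra|]. left; rewrite <- ln_1; apply ln_increasing; lra. }
  destruct (Req_dec (ln x) (a * ln x)) as [e|ne]; [rewrite <- e; lra|].
  left; apply exp_increasing. nra.
Qed.

Lemma rpow_rpow x a b : 0 <= x -> rpow (rpow x a) b = rpow x (a*b).
Proof.
  intros hx. destruct (Req_dec x 0) as [->|nx]. { rewrite !rpow_0; reflexivity. }
  rewrite (rpow_pos_eq x) by lra. rewrite rpow_pos_eq by apply exp_pos.
  rewrite rpow_pos_eq by lra. rewrite ln_exp. f_equal; ring.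
Qed.

Lemma tangent x y : exp x * (1 + y - x) <= exp y.
Proof.
  replace y with (x + (y - x)) at 2 by ring. rewrite exp_plus.
  apply Rmult_le_compat_l; [left; apply exp_pos|]. pose proof (exp_ineq1_le (y-x)); lra.
Qed.

Lemma bernoulli s p : 0 <= s -> 0 <= p <= 1 -> rpow s p <= p * s + 1 - p.
Proof.
  intros hs hp. destruct (Req_dec s 0) as [->|ns]. { rewrite rpow_0; lra. }
  rewrite rpow_pos_eq by lra.
  set (z := p * ln s).
  pose proof (tangent z (ln s)) as T1. rewrite exp_ln in T1 by lra.
  pose proof (tangent z 0) as T2. rewrite exp_0 in T2.
  assert (E : p * (exp z * (1 + ln s - z)) + (1 - p) * (exp z * (1 + 0 - z)) = exp z)
    by (unfold z; ring).
  assert (p * (exp z * (1 + ln s - z)) <= p * s) by (apply Rmult_le_compat_l; lra).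
  assert ((1 - p) * (exp z * (1 + 0 - z)) <= (1-p) * 1) by (apply Rmult_le_compat_l; lra).
  lra.
Qed.

Lemma keyG a b p : 0 <= a <= b -> b < 1 -> 0 <= p <= 1 ->
  (1 - rpow b p) * (1 - a) <= (1 - rpow a p) * (1 - b).
Proof.
  intros hab hb hp. destruct (Req_dec b 0) as [->|nb].
  { assert (a = 0) by lra. subst; lra. }
  assert (bpos : 0 < b) by lra.
  set (y := rpow b p).
  assert (H1 : rpow a p <= y * (p * (a / b) + 1 - p)).
  { replace a with (b * (a / b)) at 1 by (field; lra).
    rewrite rpow_mult by (try apply Rdiv_le_0_compat; lra).
    apply Rmult_le_compat_l; [apply rpow_ge0|]. apply bernoulli; [apply Rdiv_le_0_compat|]; lra. }
  assert (H2 : 1 <= y * (p * (1 / b) + 1 - p)).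
  { apply Rle_trans with (rpow (b * (1 / b)) p).
    { replace (b * (1 / b)) with 1 by (field; lra). rewrite rpow_1; lra. }
    rewrite rpow_mult by (try apply Rdiv_le_0_compat; lra).
    apply Rmult_le_compat_l; [apply rpow_ge0|]. apply bernoulli; [apply Rdiv_le_0_compat|]; lra. }
  assert (H3 : (1 - b) * rpow a p <= (1 - b) * (y * (p * (a / b) + 1 - p))) by (apply Rmult_le_compat_l; lra).
  assert (H4 : (b - a) * 1 <= (b - a) * (y * (p * (1 / b) + 1 - p))) by (apply Rmult_le_compat_l; lra).
  assert (E : (1 - b) * (y * (p * (a / b) + 1 - p)) + (b - a) * (y * (p * (1 / b) + 1 - p)) = y * (1 - a))
    by (field; lra).
  lra.
Qed.

Lemma keyP x y alpha beta : 0 <= x <= y -> y < 1 -> 0 < beta -> beta <= alpha ->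
  (1 - rpow y beta) * (1 - rpow x alpha) <= (1 - rpow x beta) * (1 - rpow y alpha).
Proof.
  intros hxy hy hb hba.
  assert (ha : 0 < alpha) by lra.
  replace beta with (alpha * (beta / alpha)) by (field; lra).
  rewrite <- !(rpow_rpow _ alpha) by lra.
  apply keyG.
  - split; [apply rpow_ge0|]. apply rpow_le; lra.
  - apply rpow_lt1; lra.
  - split; [apply Rdiv_le_0_compat; lra|]. apply Rmult_le_reg_r with alpha; [lra|].
    field_simplify; lra.
Qed.

Lemma subadd u v a : 0 < a <= 1 -> 0 <= u -> 0 <= v -> rpow (u + v) a <= rpow u a + rpow v a.
Proof.
  intros ha hu hv. destruct (Req_dec (u+v) 0) as [e|ne].
  { assert (u = 0) by lra. assert (v = 0) by lra. subst. rewrite Rplus_0_l, rpow_0; lra. }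
  set (S := u + v). assert (0 < S) by (unfold S; lra).
  replace (rpow u a) with (rpow (S * (u / S)) a) by (f_equal; field; lra).
  replace (rpow v a) with (rpow (S * (v / S)) a) by (f_equal; field; lra).
  assert (0 <= u / S <= 1). { split; [apply Rdiv_le_0_compat; lra|]. apply Rmult_le_reg_r with S; [lra|]. field_simplify; unfold S; lra. }
  assert (0 <= v / S <= 1). { split; [apply Rdiv_le_0_compat; lra|]. apply Rmult_le_reg_r with S; [lra|]. field_simplify; unfold S; lra. }
  rewrite !rpow_mult by lra.
  pose proof (rpow_ge_self (u/S) a ha ltac:(lra)).
  pose proof (rpow_ge_self (v/S) a ha ltac:(lra)).
  assert (u / S + v / S = 1) by (unfold S; field; lra).
  pose proof (rpow_ge0 S a).
  nra.
Qed.

Lemma rpow_unif a : 0 < a <= 1 -> forall eps, 0 < eps -> exists d, 0 < d /\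
  forall x y, 0 <= x -> 0 <= y -> Rabs (x - y) <= d -> Rabs (rpow x a - rpow y a) <= eps.
Proof.
  intros ha eps he. exists (rpow eps (/ a)). split.
  { rewrite rpow_pos_eq by lra. apply exp_pos. }
  assert (Hd : rpow (rpow eps (/a)) a = eps).
  { rewrite rpow_rpow by lra. replace (/a * a) with 1 by (field; lra).
    rewrite rpow_pos_eq by lra. rewrite Rmult_1_l, exp_ln; lra. }
  assert (W : forall x y, 0 <= x <= y -> y - x <= rpow eps (/a) -> Rabs (rpow x a - rpow y a) <= eps).
  { intros x y hxy hd. pose proof (rpow_le x y a ltac:(lra) hxy).
    pose proof (subadd x (y - x) a ha ltac:(lra) ltac:(lra)).
    replace (x + (y - x)) with y in H0 by ring.
    pose proof (rpow_le (y - x) (rpow eps (/a)) a ltac:(lra) ltac:(lra)). rewrite Hd in H1.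
    rewrite Rabs_left1 by lra. lra. }
  intros x y hx hy hxy. destruct (Rle_dec x y).
  - apply W; [lra|]. rewrite Rabs_left1 in hxy; lra.
  - rewrite Rabs_minus_sym. apply W; [lra|]. rewrite Rabs_right in hxy; lra.
Qed.

Lemma prod_int (f h : R -> R) : ex_RInt f 0 1 ->
  (forall eps, 0 < eps -> exists d, 0 < d /\ forall x y, 0 <= x -> 0 <= y ->
      Rabs (x - y) <= d -> Rabs (h x - h y) <= eps) ->
  ex_RInt (fun t => h t * f t) 0 1.
Proof.
  intros hf hu.
  destruct (ex_RInt_ub f 0 1 hf) as [M HM].
  rewrite Rmin_left, Rmax_right in HM by lra.
  assert (HM' : forall t, 0 <= t <= 1 -> Rabs (f t) <= M) by exact HM. clear HM.
  assert (M0 : 0 <= M) by (pose proof (HM' 0 ltac:(lra)); pose proof (Rabs_pos (f 0)); lra).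
  assert (approx : forall eps, 0 < eps -> exists G, ex_RInt G 0 1 /\
            forall t, Rabs (G t - h t * f t) <= eps * M).
  { intros eps he. destruct (hu eps he) as [d [hd Hd]].
    set (x := fun k : nat => Rmin (INR k * d) 1).
    assert (xk0 : forall k, 0 <= x k <= 1).
    { intro k; unfold x; split; [apply Rmin_glb; [apply Rmult_le_pos; [apply pos_INR|lra]|lra]|apply Rmin_r]. }
    assert (claim : forall k, exists G, ex_RInt G 0 (x k) /\
              forall t, 0 <= t <= x k -> Rabs (G t - h t * f t) <= eps * M).
    { induction k as [|k [G [HG1 HG2]]].
      - exists (fun t => h t * f t). unfold x; simpl. rewrite Rmult_0_l, Rmin_left by lra.
        split; [apply ex_RInt_point|]. intros t ht. unfold Rminus; rewrite Rplus_opp_r, Rabs_R0.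
        apply Rmult_le_pos; lra.
      - assert (hxx : x k <= x (S k)).
        { unfold x. rewrite S_INR. apply Rle_min_compat_r. nra. }
        pose proof (xk0 k). pose proof (xk0 (S k)).
        exists (fun t => if Rle_dec t (x k) then G t else h (x k) * f t). split.
        + apply (@ex_RInt_Chasles_0 R_NormedModule) with (x k); [lra| |].
          * apply (@ex_RInt_ext R_NormedModule) with G; [|exact HG1].
            intros t ht. rewrite Rmin_left, Rmax_right in ht by lra.
            destruct (Rle_dec t (x k)); [reflexivity|lra].
          * apply (@ex_RInt_ext R_NormedModule) with (fun t => scal (h (x k)) (f t)).
            { intros t ht. rewrite Rmin_left, Rmax_right in ht by lra.
              destruct (Rle_dec t (x k)); [lra|reflexivity]. }
            apply (@ex_RInt_scal R_NormedModule).
            apply (@ex_RInt_Chasles_1 R_CompleteNormedModule) with 1; [lra|].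
            apply (@ex_RInt_Chasles_2 R_CompleteNormedModule) with 0; [lra|exact hf].
        + intros t ht. destruct (Rle_dec t (x k)) as [l|n]; [apply HG2; lra|].
          replace (h (x k) * f t - h t * f t) with ((h (x k) - h t) * f t) by ring.
          rewrite Rabs_mult. apply Rmult_le_compat; try apply Rabs_pos.
          * apply Hd; try lra.
            assert (x k = INR k * d).
            { unfold x. unfold Rmin. destruct (Rle_dec (INR k * d) 1); [reflexivity|].
              exfalso. fold (x k) in n. unfold x in n, ht. unfold Rmin at 1 in n.
              destruct (Rle_dec (INR k * d) 1); [contradiction|].
              assert (x (S k) <= 1) by apply Rmin_r. unfold x in H1. lra. }
            assert (x (S k) <= INR (S k) * d) by apply Rmin_l.
            rewrite S_INR in H2. rewrite Rabs_left1; lra.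
          * apply HM'; lra. }
    destruct (archimed (/ d)) as [hup _].
    assert (exists N : nat, / d < INR N) as [N hN].
    { exists (Z.to_nat (up (/ d))). rewrite INR_IZR_INZ, Z2Nat.id; [lra|].
      apply le_IZR. assert (0 < / d) by (apply Rinv_0_lt_compat; lra). simpl; lra. }
    destruct (claim N) as [G [HG1 HG2]].
    assert (xN : x N = 1).
    { unfold x. apply Rmin_right. apply Rmult_lt_compat_r with (r := d) in hN; [|lra].
      rewrite Rinv_l in hN by lra. lra. }
    rewrite xN in HG1, HG2.
    exists (fun t => if Rle_dec 0 t then (if Rle_dec t 1 then G t else h t * f t) else h t * f t).
    split.
    - apply (@ex_RInt_ext R_NormedModule) with G; [|exact HG1].
      intros t ht. rewrite Rmin_left, Rmax_right in ht by lra.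
      destruct (Rle_dec 0 t); [|lra]. destruct (Rle_dec t 1); [reflexivity|lra].
    - intros t. destruct (Rle_dec 0 t); [destruct (Rle_dec t 1)|].
      + apply HG2; lra.
      + unfold Rminus; rewrite Rplus_opp_r, Rabs_R0. apply Rmult_le_pos; lra.
      + unfold Rminus; rewrite Rplus_opp_r, Rabs_R0. apply Rmult_le_pos; lra. }
  assert (Gs : forall n : nat, {G : R -> R | ex_RInt G 0 1 /\
            forall t, Rabs (G t - h t * f t) <= / (INR n + 1) * M}).
  { intro n. apply constructive_indefinite_description. apply approx.
    apply Rinv_0_lt_compat. pose proof (pos_INR n); lra. }
  set (Gn := fun n => proj1_sig (Gs n)).
  destruct (filterlim_RInt Gn 0 1 eventually eventually_filter (fun t => h t * f t)
              (fun n => RInt (Gn n) 0 1)) as [If [_ HI]].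
  - intro n. apply RInt_correct. exact (proj1 (proj2_sig (Gs n))).
  - intros P [eps HP].
    destruct (archimed_cor1 (eps / (M + 1))) as [N [hN1 hN2]].
    { apply Rdiv_lt_0_compat; [apply cond_pos|lra]. }
    exists N. intros n hn. apply HP. intro t.
    change (Rabs (Gn n t - h t * f t) < eps).
    pose proof (proj2 (proj2_sig (Gs n)) t) as B. fold (Gn n) in B.
    assert (/ (INR n + 1) < eps / (M + 1)).
    { apply Rle_lt_trans with (/ INR N); [|exact hN1].
      apply Rinv_le_contravar. apply lt_0_INR; lia. apply le_INR in hn. lra. }
    assert (/ (INR n + 1) * M <= eps / (M + 1) * M) by (apply Rmult_le_compat_r; lra).
    assert (eps / (M + 1) * M < eps).
    { pose proof (cond_pos eps). unfold Rdiv. rewrite Rmult_assoc.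
      assert (/ (M + 1) * M < 1).
      { apply Rmult_lt_reg_l with (M + 1); [lra|]. field_simplify; lra. }
      nra. }
    lra.
  - exists If. exact HI.
Qed.

Lemma scal_int g a b c : ex_RInt g a b ->
  ex_RInt (fun t => c * g t) a b /\ RInt (fun t => c * g t) a b = c * RInt g a b.
Proof.
  intro H. split.
  - exact (@ex_RInt_scal R_NormedModule g a b c H).
  - exact (@RInt_scal R_CompleteNormedModule g a b c H).
Qed.

Lemma RInt_le_scaled g1 g2 a b c1 c2 : a <= b -> ex_RInt g1 a b -> ex_RInt g2 a b ->
  (forall x, a < x < b -> c1 * g1 x <= c2 * g2 x) -> c1 * RInt g1 a b <= c2 * RInt g2 a b.
Proof.
  intros hab h1 h2 H.
  destruct (scal_int g1 a b c1 h1) as [e1 r1]. destruct (scal_int g2 a b c2 h2) as [e2 r2].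
  rewrite <- r1, <- r2. apply RInt_le; auto.
Qed.

Lemma int_h f a : 0 < a <= 1 -> ex_RInt f 0 1 ->
  ex_RInt (fun theta => (1 - rpow theta a) * f theta) 0 1.
Proof.
  intros ha hf.
  pose proof (prod_int f (fun t => rpow t a) hf (rpow_unif a ha)) as hp.
  pose proof (@ex_RInt_minus R_NormedModule f (fun t => rpow t a * f t) 0 1 hf hp) as hm.
  apply (@ex_RInt_ext R_NormedModule) with (fun y => minus (f y) (rpow y a * f y)); [|exact hm].
  intros t _. change (f t - rpow t a * f t = (1 - rpow t a) * f t). ring.
Qed.

Theorem lemma4 (f : R -> R) (delta alpha beta : R)
  (hf_nonneg : forall theta, 0 <= theta <= 1 -> 0 <= f theta)
  (hf_int : ex_RInt f 0 1)
  (hdelta : 0 < delta < 1)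
  (hbeta : 0 < beta) (hba : beta < alpha) (halpha : alpha <= 1)
  (hpos : 0 < RInt (fun theta => (1 - rpow theta alpha) * f theta) 0 1) :
  RInt (fun theta => (1 - rpow theta alpha) * f theta) 0 delta
    / RInt (fun theta => (1 - rpow theta alpha) * f theta) 0 1
  <= RInt (fun theta => (1 - rpow theta beta) * f theta) 0 delta
    / RInt (fun theta => (1 - rpow theta beta) * f theta) 0 1.
Proof.
  set (ha := fun theta => (1 - rpow theta alpha) * f theta).
  set (hb := fun theta => (1 - rpow theta beta) * f theta).
  assert (Ia : ex_RInt ha 0 1) by (apply int_h; lra || assumption).
  assert (Ib : ex_RInt hb 0 1) by (apply int_h; lra || assumption).
  assert (Ia1 : ex_RInt ha 0 delta) by (apply (@ex_RInt_Chasles_1 R_CompleteNormedModule) with 1; [lra|exact Ia]).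
  assert (Ia2 : ex_RInt ha delta 1) by (apply (@ex_RInt_Chasles_2 R_CompleteNormedModule) with 0; [lra|exact Ia]).
  assert (Ib1 : ex_RInt hb 0 delta) by (apply (@ex_RInt_Chasles_1 R_CompleteNormedModule) with 1; [lra|exact Ib]).
  assert (Ib2 : ex_RInt hb delta 1) by (apply (@ex_RInt_Chasles_2 R_CompleteNormedModule) with 0; [lra|exact Ib]).
  assert (Ea : RInt ha 0 1 = RInt ha 0 delta + RInt ha delta 1)
    by (symmetry; exact (@RInt_Chasles R_CompleteNormedModule ha 0 delta 1 Ia1 Ia2)).
  assert (Eb : RInt hb 0 1 = RInt hb 0 delta + RInt hb delta 1)
    by (symmetry; exact (@RInt_Chasles R_CompleteNormedModule hb 0 delta 1 Ib1 Ib2)).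
  assert (pa : forall t, 0 <= t <= 1 -> 0 <= ha t).
  { intros t ht. unfold ha. apply Rmult_le_pos; [|auto]. pose proof (rpow_le1 t alpha ltac:(lra) ht); lra. }
  assert (pb : forall t, 0 <= t <= 1 -> 0 <= hb t).
  { intros t ht. unfold hb. apply Rmult_le_pos; [|auto]. pose proof (rpow_le1 t beta ltac:(lra) ht); lra. }
  assert (A1 : 0 <= RInt ha 0 delta) by (apply RInt_ge_0; [lra|auto|intros; apply pa; lra]).
  assert (A2 : 0 <= RInt ha delta 1) by (apply RInt_ge_0; [lra|auto|intros; apply pa; lra]).
  assert (B1 : 0 <= RInt hb 0 delta) by (apply RInt_ge_0; [lra|auto|intros; apply pb; lra]).
  assert (B2 : 0 <= RInt hb delta 1) by (apply RInt_ge_0; [lra|auto|intros; apply pb; lra]).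
  set (ca := 1 - rpow delta alpha). set (cb := 1 - rpow delta beta).
  assert (ca0 : 0 < ca) by (unfold ca; pose proof (rpow_lt1 delta alpha ltac:(lra) ltac:(lra)); lra).
  assert (cb0 : 0 < cb) by (unfold cb; pose proof (rpow_lt1 delta beta ltac:(lra) ltac:(lra)); lra).
  assert (L1 : cb * RInt ha 0 delta <= ca * RInt hb 0 delta).
  { apply RInt_le_scaled; auto; [lra|]. intros t ht. unfold ha, hb, ca, cb.
    pose proof (keyP t delta alpha beta ltac:(lra) ltac:(lra) ltac:(lra) ltac:(lra)).
    pose proof (hf_nonneg t ltac:(lra)).
    replace ((1 - rpow delta beta) * ((1 - rpow t alpha) * f t)) with
      (((1 - rpow delta beta) * (1 - rpow t alpha)) * f t) by ring.
    replace ((1 - rpow delta alpha) * ((1 - rpow t beta) * f t)) with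
      (((1 - rpow t beta) * (1 - rpow delta alpha)) * f t) by ring.
    apply Rmult_le_compat_r; lra. }
  assert (L2 : ca * RInt hb delta 1 <= cb * RInt ha delta 1).
  { apply RInt_le_scaled; auto; [lra|]. intros t ht. unfold ha, hb, ca, cb.
    pose proof (keyP delta t alpha beta ltac:(lra) ltac:(lra) ltac:(lra) ltac:(lra)).
    pose proof (hf_nonneg t ltac:(lra)).
    replace ((1 - rpow delta beta) * ((1 - rpow t alpha) * f t)) with
      (((1 - rpow delta beta) * (1 - rpow t alpha)) * f t) by ring.
    replace ((1 - rpow delta alpha) * ((1 - rpow t beta) * f t)) with
      (((1 - rpow t beta) * (1 - rpow delta alpha)) * f t) by ring.
    apply Rmult_le_compat_r; lra. }
  fold ha hb in hpos |- *. rewrite Ea, Eb in *.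
  set (a1 := RInt ha 0 delta) in *. set (a2 := RInt ha delta 1) in *.
  set (b1 := RInt hb 0 delta) in *. set (b2 := RInt hb delta 1) in *.
  destruct (Req_dec (b1 + b2) 0) as [z|nz].
  - assert (b1 = 0) by lra. assert (a1 = 0) by nra.
    rewrite z. replace a1 with 0 by auto. replace b1 with 0 by auto. unfold Rdiv; rewrite !Rmult_0_l; lra.
  - assert (P1 : cb * a1 * a2 <= ca * b1 * a2) by (apply Rmult_le_compat_r; lra).
    assert (P2 : ca * b2 * a1 <= cb * a2 * a1) by (apply Rmult_le_compat_r; lra).
    assert (K : 0 <= b1 * a2 - a1 * b2).
    { apply Rmult_le_reg_l with ca; [lra|]. nra. }
    assert (D : b1 / (b1 + b2) - a1 / (a1 + a2) = (b1 * a2 - a1 * b2) / ((a1 + a2) * (b1 + b2)))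
      by (field; lra).
    assert (0 <= (b1 * a2 - a1 * b2) / ((a1 + a2) * (b1 + b2))).
    { apply Rdiv_le_0_compat; [lra|]. apply Rmult_lt_0_compat; lra. }
    lra.
Qed.
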